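(* We have \[ (n-1)P_{n-1}(y)=P'_{n-1}(y)-P'_n(y)\quad(n\ge1),\qquad (n-1)Q_{n-1}(y)=Q'_{n-1}(y)-Q'_n(y)\quad(n\ge2). \]
   Context: Let $A$ be the ring of formal series $\sum_{n\ge0}q_n(y)x^{-n}$, each $q_n$ a complex polynomial of degree at most $n$, with termwise formal derivatives $a_x=-\sum_{n\ge1}nq_n(y)x^{-n-1}$, $a_y=\sum_{n\ge1}q_n'(y)x^{-n}$, and $\log(1+u)=\sum_{k\ge1}(-1)^{k+1}u^k/k$ for $u$ with zero constant term. Let $V\in A$ be the unique solution of $V=1+\frac{y}{x}-\frac{1}{x}V-V_x-\frac{1}{x}V_y+\frac{1}{x}\log V$, and define polynomials $P_{n-1}$ ($n\ge1$) and $Q_n$ ($n\ge1$) by $V=1+\sum_{n\ge1}P_{n-1}(y)x^{-n}$ and $\log V=\sum_{n\ge1}Q_n(y)x^{-n}$ (so $P_0=y-1$). Primes denote derivatives in $y$. *)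

(* Defs.v *)
From HB Require Import structures.
From mathcomp Require Import all_boot all_order all_algebra.
From mathcomp Require Import complex.
From mathcomp Require Import Rstruct.
From Stdlib Require Reals.
Set Implicit Arguments. Unset Strict Implicit. Unset Printing Implicit Defensive.
Import Order.TTheory GRing.Theory Num.Theory.
Local Open Scope ring_scope.

Definition C : Type := (complex Reals.Rdefinitions.R).

(* A formal series  sum_{n>=0} a n (y) x^{-n},  coefficients in C[y]. *)
Definition series := nat -> {poly C}.

(* membership in the ring A : deg (a n) <= n *)
Definition inA (a : series) : Prop := forall n, (size (a n) <= n.+1)%N.

Definition sone : series := fun n => (n == 0%N)%:R%:P.
Definition smul (a b : series) : series :=
  fun n => \sum_(i < n.+1) a i * b (n - i)%N.
Definition spow (a : series) (k : nat) : series := iter k (smul a) sone.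
(* log(1+u) = sum_{k>=1} (-1)^{k+1} u^k / k, for u with zero constant term;
   only k <= n contributes to the coefficient of x^{-n}. *)
Definition slog1p (u : series) : series :=
  fun n => \sum_(1 <= k < n.+1) (((-1) ^+ k.+1 / k%:R : C) *: spow u k n).
Definition sxinv (a : series) : series :=
  fun n => if n is m.+1 then a m else 0.
(* a_x = - sum_{m>=1} m a_m x^{-m-1} *)
Definition sdx (a : series) : series :=
  fun n => if n is m.+1 then - (m%:R *: a m) else 0.
Definition sdy (a : series) : series := fun n => (a n)^`().
Definition y_over_x : series := fun n => if n == 1%N then 'X else 0.
Definition sminus1 (a : series) : series := fun n => a n - sone n.
Definition slog (V : series) : series := slog1p (sminus1 V).

(* right-hand side of  V = 1 + y/x - V/x - V_x - V_y/x + (log V)/x *)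
Definition Veq_rhs (V : series) : series :=
  fun n => sone n + y_over_x n - sxinv V n - sdx V n - sxinv (sdy V) n
           + sxinv (slog V) n.

(* V = 1 + sum_{n>=1} P_{n-1} x^{-n} ; log V = sum_{n>=1} Q_n x^{-n} *)
Definition Pcoef (V : series) (m : nat) : {poly C} := V m.+1.
Definition Qcoef (V : series) (n : nat) : {poly C} := slog V n.

(* Main.v *)
Require Import Defs.
From HB Require Import structures.
From mathcomp Require Import all_boot all_order all_algebra.
From mathcomp Require Import complex Rstruct.
From Stdlib Require Import FunctionalExtensionality.
Import GRing.Theory Num.Theory.
Local Open Scope ring_scope.
Lemma smul_coef (a b : series) (P Q : {poly {poly C}}) n :
  (forall m, (m <= n)%N -> a m = P`_m) -> (forall m, (m <= n)%N -> b m = Q`_m) ->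
  smul a b n = (P * Q)`_n.
Proof.
move=> Ha Hb; rewrite coefM /smul; apply: eq_bigr => i _.
rewrite Ha ?Hb //; [exact: leq_subr | by rewrite -ltnS].
Qed.

Definition trs (N : nat) (a : series) : {poly {poly C}} := \poly_(i < N) a i.

Lemma trsE N a m : (m < N)%N -> (trs N a)`_m = a m.
Proof. by move=> h; rewrite coef_poly h. Qed.

Lemma smulC a b : smul a b = smul b a.
Proof.
apply: functional_extensionality => n.
rewrite (@smul_coef a b (trs n.+1 a) (trs n.+1 b)); last 2 first.
- by move=> m hm; rewrite trsE.
- by move=> m hm; rewrite trsE.
rewrite mulrC -(@smul_coef b a) //.
- by move=> m hm; rewrite trsE.
- by move=> m hm; rewrite trsE.
Qed.

Lemma smulA a b c : smul a (smul b c) = smul (smul a b) c.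
Proof.
apply: functional_extensionality => n.
have E1 : forall m, (m <= n)%N -> smul b c m = (trs n.+1 b * trs n.+1 c)`_m.
  move=> m hm; apply: smul_coef => k hk; rewrite trsE //; exact: leq_ltn_trans hk _.
have E2 : forall m, (m <= n)%N -> smul a b m = (trs n.+1 a * trs n.+1 b)`_m.
  move=> m hm; apply: smul_coef => k hk; rewrite trsE //; exact: leq_ltn_trans hk _.
rewrite (@smul_coef a (smul b c) (trs n.+1 a) (trs n.+1 b * trs n.+1 c)) //; last first.
  by move=> m hm; rewrite trsE.
rewrite (@smul_coef (smul a b) c (trs n.+1 a * trs n.+1 b) (trs n.+1 c)) //; last first.
  by move=> m hm; rewrite trsE.
by rewrite mulrA.
Qed.

From mathcomp Require Import ring.

Definition Dop (a : series) : series :=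
  fun n => (a n.+1)^`() - (a n)^`() + n%:R *: a n.
Definition sder (a : series) : series := fun n => (a n)^`().
Definition sshift (a : series) : series := fun n => a n.+1.
Definition sE (a : series) : series := fun n => n%:R *: a n.

Lemma smul_lin3 f g h b n :
  smul (fun i => f i - g i + h i) b n = smul f b n - smul g b n + smul h b n.
Proof.
rewrite /smul -sumrB -big_split /=; apply: eq_bigr => i _.
by rewrite mulrDl mulrBl.
Qed.

Lemma smul_der a b n : (smul a b n)^`() = smul (sder a) b n + smul a (sder b) n.
Proof.
rewrite /smul -big_split /= raddf_sum; apply: eq_bigr => i _.
exact: derivM.
Qed.

Lemma smulS c d n : smul c d n.+1 = c 0%N * d n.+1 + smul (sshift c) d n.
Proof. by rewrite /smul big_ord_recl /= subn0. Qed.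

Lemma smul_E a b n : n%:R *: smul a b n = smul (sE a) b n + smul a (sE b) n.
Proof.
rewrite /smul scaler_sumr -big_split /=; apply: eq_bigr => [[i hi]] _ /=.
by rewrite /sE -scalerAl -scalerAr -scalerDl -natrD subnKC.
Qed.

Lemma Dop_mul a b : (a 0%N)^`() = 0 -> (b 0%N)^`() = 0 ->
  Dop (smul a b) = fun n => smul (Dop a) b n + smul a (Dop b) n.
Proof.
move=> ha hb; apply: functional_extensionality => n.
have -> : Dop a = fun i => sshift (sder a) i - sder a i + sE a i by [].
have -> : Dop b = fun i => sshift (sder b) i - sder b i + sE b i by [].
rewrite (smul_lin3 (sshift (sder a)) (sder a) (sE a)).
rewrite (smulC a (fun i => _ - _ + _)).
rewrite (smul_lin3 (sshift (sder b)) (sder b) (sE b)).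
rewrite /Dop !smul_der smul_E smulS [smul a (sder b)]smulC smulS.
rewrite /sder ha hb !mul0r !add0r.
rewrite (smulC a (sE b)). ring.
Qed.

From mathcomp Require Import zify.

Lemma spow_low u : u 0%N = 0 -> forall k j, (j < k)%N -> spow u k j = 0.
Proof.
move=> hu; elim=> [|k IH] j hj //.
rewrite /= /smul big1 // => [[i hi]] _ /=.
case: i hi => [|i] hi; first by rewrite hu mul0r.
rewrite -/(spow u k) IH ?mulr0 //; lia.
Qed.

Lemma smul1 a : smul a sone = a.
Proof.
apply: functional_extensionality => n.
rewrite /smul big_ord_recr /= subnn big1 ?add0r; first by rewrite mulr1.
move=> [i hi] _ /=; rewrite /sone.
have -> : (n - i == 0)%N = false by apply/negbTE; rewrite subn_eq0 -ltnNge.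
by rewrite mulr0.
Qed.

Lemma smul1l a : smul sone a = a.
Proof. by rewrite smulC smul1. Qed.

Lemma smulZr a b (c : C) n : smul a (fun i => c *: b i) n = c *: smul a b n.
Proof. by rewrite /smul scaler_sumr; apply: eq_bigr => i _; rewrite scalerAr. Qed.

Lemma smul_addl a b c n : smul (fun i => a i + b i) c n = smul a c n + smul b c n.
Proof. by rewrite /smul -big_split; apply: eq_bigr => i _; rewrite mulrDl. Qed.

Lemma smul_sumr a (F : nat -> series) N n :
  smul a (fun i => \sum_(k < N) F k i) n = \sum_(k < N) smul a (F k) n.
Proof.
rewrite /smul exchange_big /=; apply: eq_bigr => i _; by rewrite mulr_sumr.
Qed.

Lemma spow_der0 u k : u 0%N = 0 -> (spow u k 0%N)^`() = 0.
Proof.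
move=> hu; case: k => [|k]; first by rewrite /= /sone /= derivC.
by rewrite spow_low // deriv0.
Qed.

Lemma Dpow u : u 0%N = 0 -> forall k,
  Dop (spow u k.+1) = fun n => k.+1%:R *: smul (spow u k) (Dop u) n.
Proof.
move=> hu; elim=> [|k IH].
  apply: functional_extensionality => n.
  by rewrite /= smul1 smul1l scale1r.
have -> : spow u k.+2 = smul u (spow u k.+1) by [].
rewrite Dop_mul; last 2 first.
- by rewrite hu deriv0.
- exact: (spow_der0 u k.+1 hu).
rewrite IH; apply: functional_extensionality => n.
rewrite smulZr smulA -/(spow u k.+2) smulC.
by rewrite -[in RHS](addn1 k.+1) natrD scalerDl scale1r addrC.
Qed.

Definition cf (k : nat) : C := (-1) ^+ k.+1 / k%:R.
Definition LN (u : series) (N : nat) : series :=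
  fun j => \sum_(1 <= k < N.+1) cf k *: spow u k j.

Lemma L_LN u N j : u 0%N = 0 -> (j <= N)%N -> slog1p u j = LN u N j.
Proof.
move=> hu hj; rewrite /slog1p /LN (@big_cat_nat _ _ _ j.+1 1 N.+1) //=.
have -> : \sum_(j.+1 <= k < N.+1) cf k *: spow u k j = 0.
  rewrite big_nat_cond big1 // => k /andP[/andP[hk _] _].
  by rewrite spow_low // scaler0.
by rewrite addr0.
Qed.

Lemma DLN u N n : u 0%N = 0 ->
  Dop (LN u N) n = \sum_(k < N) (-1) ^+ k *: smul (spow u k) (Dop u) n.
Proof.
move=> hu.
have -> : Dop (LN u N) n = \sum_(1 <= k < N.+1) cf k *: Dop (spow u k) n.
  rewrite /Dop /LN !raddf_sum -!big_split /=.
  apply: eq_bigr => k _; rewrite !derivZ. by rewrite scalerDr scalerBr !scalerA mulrC.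
rewrite big_add1 /= big_mkord; apply: eq_bigr => k _.
rewrite Dpow // scalerA /cf divfK ?pnatr_eq0 //.
by rewrite !exprS !mulN1r opprK.
Qed.

Lemma telesc (t : nat -> {poly C}) N :
  \sum_(k < N) (-1) ^+ k *: (t k + t k.+1) = t 0%N - (-1) ^+ N *: t N.
Proof.
elim: N => [|N IH]; first by rewrite big_ord0 expr0 scale1r subrr.
rewrite big_ord_recr /= IH exprS mulN1r scaleNr opprK scalerDr.
by rewrite addrA subrK.
Qed.

Lemma log_key u : u 0%N = 0 -> forall n,
  smul (fun i => sone i + u i) (Dop (slog1p u)) n = Dop u n.
Proof.
move=> hu n.
have E : forall i, (i <= n)%N -> Dop (slog1p u) i = Dop (LN u n.+1) i.
  by move=> i hi; rewrite /Dop !(@L_LN u n.+1) //; lia.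
have -> : smul (fun i => sone i + u i) (Dop (slog1p u)) n =
          smul (fun i => sone i + u i) (Dop (LN u n.+1)) n.
  by rewrite /smul; apply: eq_bigr => i _; rewrite E // leq_subr.
have -> : Dop (LN u n.+1) = fun i =>
    \sum_(k < n.+1) (-1) ^+ k *: smul (spow u k) (Dop u) i.
  by apply: functional_extensionality => i; rewrite DLN.
rewrite (smul_sumr _ (fun k i => (-1) ^+ k *: smul (spow u k) (Dop u) i)).
set t := fun k => smul (spow u k) (Dop u) n.
transitivity (\sum_(k < n.+1) (-1) ^+ k *: (t k + t k.+1)).
  apply: eq_bigr => k _.
  rewrite smulZr smul_addl smul1l smulA /t; congr (_ *: (_ + _)).
rewrite telesc /t /= smul1l.
have -> : smul (spow u n.+1) (Dop u) n = 0.
  rewrite /smul big1 // => [[i hi]] _ /=.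
  by rewrite -[smul u (spow u n)]/(spow u n.+1) (@spow_low u hu n.+1 i) ?mul0r.
by rewrite scaler0 subr0.
Qed.

Lemma Dop_sminus1 V : Dop (sminus1 V) = Dop V.
Proof.
apply: functional_extensionality => n.
rewrite /Dop /sminus1 /sone !derivB !derivC !subr0 scalerBr.
case: n => [|n]; first by rewrite !scale0r subr0.
by rewrite (_ : ((n.+1 == 0%N)%:R)%:P = 0) ?scaler0 ?subr0 // polyC0.
Qed.

Section Main.
Variable V : series.
Hypothesis hV : forall n, V n = Veq_rhs V n.

Let L := slog V.
Definition G (n : nat) : {poly C} := Dop V n - V n.

Lemma V0 : V 0%N = 1.
Proof. by rewrite hV /Veq_rhs /sone /y_over_x /= !subr0 !addr0. Qed.

Lemma Lrec n : L n = V n.+1 - y_over_x n.+1 + V n - V n *+ n + (V n)^`().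
Proof.
rewrite (hV n.+1) /Veq_rhs /sone /sxinv /sdx /sdy /= -/L scaler_nat.
rewrite add0r; ring.
Qed.

Lemma L0 : L 0%N = 0.
Proof. by rewrite /L /slog /slog1p big_geq. Qed.

Lemma DLrec n : Dop L n = sone n + G n.+1 - G n *+ n + (G n)^`().
Proof.
rewrite /Dop /G /Dop !Lrec !scaler_nat.
rewrite !(derivD, derivN, derivB, derivMn).
case: n => [|n].
  rewrite /y_over_x /sone /= derivX !derivC mulr0n !mulr0n; ring.
rewrite /y_over_x /sone /= !derivC; ring.
Qed.

Lemma key n : smul V (Dop L) n = Dop V n.
Proof.
have hu : sminus1 V 0%N = 0 by rewrite /sminus1 V0 /sone /= subrr.
have := @log_key (sminus1 V) hu n; rewrite Dop_sminus1.
have -> : (fun i => sone i + sminus1 V i) = V.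
  by apply: functional_extensionality => i; rewrite /sminus1 addrC subrK.
by [].
Qed.

Lemma Gzero : forall n, G n = 0.
Proof.
suff H : forall n m, (m <= n)%N -> G m = 0 by move=> n; exact: (H n n).
elim=> [|n IH] m hm.
  move: hm; rewrite leqn0 => /eqP ->.
  rewrite /G /Dop (hV 1%N) /Veq_rhs /sone /y_over_x /sxinv /sdx /sdy /= -/L L0.
  rewrite V0 !(derivD, derivN, derivB, derivZ) derivX !derivC scale0r; rewrite !scale0r; ring.
case: (ltngtP m n.+1) hm => // [hlt _|-> _]; first by apply: IH; rewrite -ltnS.
move: (key n).
have -> : Dop L = fun i => sone i + (G i.+1 - G i *+ i + (G i)^`()) by
  apply: functional_extensionality => i; rewrite DLrec; ring.
rewrite /smul.
under eq_bigr => i _ do rewrite mulrDr.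
rewrite big_split /= -/(smul V sone n) smul1 big_ord_recl /= subn0 V0 mul1r.
rewrite big1; last first.
  move=> [i hi] _ /=; rewrite /bump /= add1n.
  rewrite !IH ?deriv0 ?mul0rn ?subrr ?addr0 ?mulr0 //; lia.
rewrite (IH n) // deriv0 mul0rn subr0 !addr0 => E.
have E2 : Dop V n = V n by apply/eqP; rewrite -subr_eq0 -/(G n) IH.
rewrite E2 in E.
by have := congr1 (fun x => x - V n) E; rewrite /= addrC addrK subrr.
Qed.

End Main.

Theorem theorem4p6 (V : series) :
  inA V -> (forall n, V n = Veq_rhs V n) ->
  (forall n : nat, (1 <= n)%N ->
     (n - 1)%:R *: Pcoef V n.-1 = (Pcoef V n.-1)^`() - (Pcoef V n)^`()) /\
  (forall n : nat, (2 <= n)%N ->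
     (n - 1)%:R *: Qcoef V n.-1 = (Qcoef V n.-1)^`() - (Qcoef V n)^`()).
Proof.
move=> _ hV; split.
- case=> [|m] // _; rewrite /Pcoef /= subn1 /=.
  have := Gzero V hV m.+1; rewrite /G /Dop !scaler_nat => H.
  apply/eqP; rewrite -subr_eq0; apply/eqP; rewrite -[RHS]H; ring.
- case=> [|[|m]] // _; rewrite /Qcoef /= subn1 /=.
  have := DLrec V hV m.+1; rewrite !(Gzero V hV) deriv0 mul0rn /Dop /sone /=.
  rewrite (_ : ((m.+1 == 0%N)%:R)%:P = 0) ?polyC0 // !scaler_nat => H.
  apply/eqP; rewrite -subr_eq0; apply/eqP.
  have H' : (slog V m.+2)^`() - (slog V m.+1)^`() + slog V m.+1 *+ m.+1 = 0.
    by rewrite H; ring.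
  rewrite -[RHS]H'; ring.
Qed.
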